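(* Let $m,n$ be positive integers, $A\in\mathbb{C}^{n\times n}$, $B\in\mathbb{C}^{n\times m}$ with $\operatorname{rank}(B)=m$, $(A,B)$ reachable and all eigenvalues of $A$ of modulus $<1$. Let $\mathbf{R}\in\mathbb{C}^{n\times n}$ be Hermitian with $\mathbf{R}\geq0$ and $\mathbf{R}-A\mathbf{R}A^*=BH+H^*B^*$ for some $H\in\mathbb{C}^{m\times n}$. Let $\Omega$ be the $\mathbb{H}_m$-minimal value of $q_{\mathbf{R}}(\Gamma)=\Gamma\mathbf{R}\Gamma^*$ over $\Gamma\in\mathbb{C}^{m\times n}$ subject to $\Gamma B=I_m$. If $\Omega>0$ then $\mathbf{R}>0$.
   Context: $\mathbb{H}_m$ is the space of $m\times m$ Hermitian matrices partially ordered by $X\geq Y$ iff $X-Y$ is nonnegative definite. The $\mathbb{H}_m$-minimal value is $q_{\mathbf{R}}(\Gamma_0)$ for some $\Gamma_0$ with $\Gamma_0B=I_m$ and $q_{\mathbf{R}}(\Gamma_0)\leq q_{\mathbf{R}}(\Gamma)$ for all $\Gamma$ with $\Gamma B=I_m$ (such a least element exists). $(A,B)$ reachable means $\operatorname{rank}[B,AB,\dots,A^{n-1}B]=n$. *)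

(* Defs.v *)
From HB Require Import structures.
From mathcomp Require Import all_boot all_order all_algebra.
From mathcomp Require Import complex.
From mathcomp Require Import reals.
Set Implicit Arguments. Unset Strict Implicit. Unset Printing Implicit Defensive.
Import Order.TTheory GRing.Theory Num.Theory.
Local Open Scope ring_scope.

Definition ctmx (C : numClosedFieldType) m n (M : 'M[C]_(m, n)) : 'M[C]_(n, m) :=
  (map_mx Num.conj M)^T.

Definition qf (C : numClosedFieldType) n (M : 'M[C]_n) (v : 'cV[C]_n) : C :=
  (ctmx v *m M *m v) 0 0.

Definition herm_mx (C : numClosedFieldType) n (M : 'M[C]_n) : Prop :=
  ctmx M = M.

Definition psd (C : numClosedFieldType) n (M : 'M[C]_n) : Prop :=
  forall v : 'cV[C]_n, 0 <= qf M v.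

Definition pd (C : numClosedFieldType) n (M : 'M[C]_n) : Prop :=
  forall v : 'cV[C]_n, v != 0 -> 0 < qf M v.

(* Loewner order on H_m: X <= Y iff Y - X is nonnegative definite *)
Definition loewner_le (C : numClosedFieldType) n (X Y : 'M[C]_n) : Prop :=
  psd (Y - X).

Definition qR (C : numClosedFieldType) m n (Rm : 'M[C]_n) (G : 'M[C]_(m, n)) : 'M[C]_m :=
  G *m Rm *m ctmx G.

Definition reach_mx (C : numClosedFieldType) n m (A : 'M[C]_n) (B : 'M[C]_(n, m)) :=
  \mxrow_(k < n) (A ^+ k *m B).

Definition reachable (C : numClosedFieldType) n m (A : 'M[C]_n) (B : 'M[C]_(n, m)) : Prop :=
  \rank (reach_mx A B) = n.

(* Main.v *)
Require Import Defs.
From HB Require Import structures.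
From mathcomp Require Import all_boot all_order all_algebra.
From mathcomp Require Import complex.
From mathcomp Require Import reals.
From mathcomp Require Import ring.
Import Order.TTheory GRing.Theory Num.Theory.
Local Open Scope ring_scope.

Section CT.
Variable C : numClosedFieldType.

Lemma ctmxK m n (M : 'M[C]_(m, n)) : ctmx (ctmx M) = M.
Proof. by apply/matrixP=> i j; rewrite !mxE conjCK. Qed.

Lemma ctmxM m n p (A : 'M[C]_(m, n)) (B : 'M[C]_(n, p)) :
  ctmx (A *m B) = ctmx B *m ctmx A.
Proof. by rewrite /ctmx (map_mxM Num.Def.conjC) trmx_mul. Qed.

Lemma ctmxD m n (A B : 'M[C]_(m, n)) : ctmx (A + B) = ctmx A + ctmx B.
Proof. by apply/matrixP=> i j; rewrite !mxE rmorphD. Qed.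

Lemma ctmxN m n (A : 'M[C]_(m, n)) : ctmx (- A) = - ctmx A.
Proof. by apply/matrixP=> i j; rewrite !mxE rmorphN. Qed.

Lemma ctmxB m n (A B : 'M[C]_(m, n)) : ctmx (A - B) = ctmx A - ctmx B.
Proof. by rewrite ctmxD ctmxN. Qed.

Lemma ctmxZ m n a (A : 'M[C]_(m, n)) : ctmx (a *: A) = a^* *: ctmx A.
Proof. by apply/matrixP=> i j; rewrite !mxE rmorphM. Qed.

Lemma ctmx0 m n : ctmx (0 : 'M[C]_(m, n)) = 0.
Proof. by apply/matrixP=> i j; rewrite !mxE rmorph0. Qed.

Lemma ctmx_scalar n a : ctmx (a%:M : 'M[C]_n) = a^*%:M.
Proof. by apply/matrixP=> i j; rewrite !mxE rmorphMn eq_sym. Qed.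

Lemma ctmx1 n : ctmx (1%:M : 'M[C]_n) = 1%:M.
Proof. by rewrite ctmx_scalar rmorph1. Qed.

Lemma ctmx_eq0 m n (A : 'M[C]_(m, n)) : ctmx A = 0 -> A = 0.
Proof. by move=> h; rewrite -[A]ctmxK h ctmx0. Qed.

Lemma real_of_ge0 (x : C) : 0 <= x -> x^* = x.
Proof. by move=> h; apply: conj_Creal; apply: ger0_real. Qed.

Lemma sqnorm_ge0 n (w : 'cV[C]_n) : 0 <= (ctmx w *m w) 0 0.
Proof.
rewrite !mxE; apply: sumr_ge0 => i _; rewrite !mxE mulrC; exact: mul_conjC_ge0.
Qed.

Lemma sqnorm_eq0 n (w : 'cV[C]_n) : (ctmx w *m w) 0 0 = 0 -> w = 0.
Proof.
rewrite !mxE => h; apply/matrixP=> i j; rewrite (ord1 j) mxE.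
have H0 : forall k, predT k -> 0 <= ctmx w 0 k * w k 0.
  by move=> k _; rewrite !mxE mulrC; exact: mul_conjC_ge0.
have := psumr_eq0P H0 h (i:=i) isT.
by rewrite !mxE mulrC => /eqP; rewrite mul_conjC_eq0 => /eqP.
Qed.


Lemma entry_comb n (X Y Z W : 'M[C]_n) (s t : C) (i j : 'I_n) :
  (X - s *: Y - s *: Z + t *: W) i j = X i j - s * Y i j - s * Z i j + t * W i j.
Proof. by rewrite !mxE. Qed.

Lemma psd_ker n (M : 'M[C]_n) (v : 'cV[C]_n) :
  herm_mx M -> psd M -> qf M v = 0 -> M *m v = 0.
Proof.
move=> hh hp hv.
set w := M *m v.
set a := (ctmx w *m w) 0 0.
set q := qf M w.
have ha : 0 <= a by apply: sqnorm_ge0.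
have hq : 0 <= q by apply: hp.
apply: sqnorm_eq0; rewrite -/a.
have [//|ha0] := eqVneq a 0.
have apos : 0 < a by rewrite lt_def ha0 ha.
have q1 : 0 < q + 1 by rewrite ltr_wpDl.
set s := a / (q + 1).
have spos : 0 <= s by rewrite divr_ge0 // ltW.
have sc : s^* = s by apply: real_of_ge0.
have := hp (v - s *: w).
have E : ctmx (v - s *: w) *m M *m (v - s *: w) =
   (ctmx v *m M *m v) - s *: (ctmx v *m M *m w) - s *: (ctmx w *m M *m v)
   + (s * s) *: (ctmx w *m M *m w).
  rewrite ctmxB ctmxZ sc !mulmxBl !mulmxBr.
  idtac.
  rewrite -!scalemxAl -!scalemxAr !scalerA.
  idtac.
  by rewrite opprB addrA addrAC.
rewrite /qf E entry_comb -/(qf M v) hv -/(qf M w) -/q.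
have e1 : (ctmx w *m M *m v) 0 0 = a by rewrite -mulmxA.
have e2 : (ctmx v *m M *m w) 0 0 = a.
  by rewrite /a /w -{1}hh -ctmxM mulmxA.
rewrite e1 e2.
have -> : 0 - s * a - s * a + s * s * q = - (a * a * (q + 2%:R) / ((q + 1) * (q + 1))).
  rewrite /s; field; by rewrite lt0r_neq0.
rewrite oppr_ge0 => h.
have : 0 < a * a * (q + 2%:R) / ((q + 1) * (q + 1)).
  by rewrite divr_gt0 ?mulr_gt0 // ltr_wpDl.
by move=> hpos; move: (lt_le_trans hpos h); rewrite ltxx.
Qed.
Lemma main_gen (m n : nat)
  (A : 'M[C]_n) (B : 'M[C]_(n, m))
  (hreach : reachable A B)
  (Rm : 'M[C]_n) (hRherm : herm_mx Rm) (hRpsd : psd Rm)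
  (hstein : exists H : 'M[C]_(m, n),
      Rm - A *m Rm *m ctmx A = B *m H + ctmx H *m ctmx B)
  (Gamma0 : 'M[C]_(m, n)) (hG0 : Gamma0 *m B = 1%:M)
  (hmin : forall Gamma : 'M[C]_(m, n), Gamma *m B = 1%:M ->
      loewner_le (qR Rm Gamma0) (qR Rm Gamma))
  (hOmega : pd (qR Rm Gamma0)) :
  pd Rm.
Proof.
set Om := qR Rm Gamma0 in hmin hOmega *.
have hOh : herm_mx Om.
  by rewrite /herm_mx /Om /qR !ctmxM ctmxK hRherm mulmxA.
have vR : forall v : 'cV_n, Rm *m v = 0 -> ctmx v *m Rm = 0.
  by move=> v hv; rewrite -{1}hRherm -ctmxM hv ctmx0.
have stepA : forall v : 'cV_n, Rm *m v = 0 -> ctmx B *m v = 0.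
  move=> v hv; apply/eqP/negPn/negP => hw.
  set w := ctmx B *m v in hw.
  set c := qf Om w.
  have hc : 0 < c := hOmega w hw.
  have cc : c^* = c by apply: real_of_ge0; apply: ltW.
  have C1 : ctmx w *m Om *m w = c%:M by rewrite {1}[ctmx w *m Om *m w]mx11_scalar.
  have vB : ctmx v *m B = ctmx w by rewrite /w ctmxM ctmxK.
  have G'R : (Gamma0 + Om *m w *m ctmx v) *m Rm *m ctmx (Gamma0 + Om *m w *m ctmx v) = Om.
    rewrite mulmxDl -(mulmxA (Om *m w)) vR // mulmx0 addr0 ctmxD mulmxDr ctmxM ctmxK.
    by rewrite mulmxA -(mulmxA Gamma0 Rm v) hv mulmx0 mul0mx addr0.
  clearbody w Om.
  set P := Om *m w *m ctmx w.
  have PP : P *m P = c *: P.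
    have -> : P *m P = Om *m w *m (ctmx w *m Om *m w) *m ctmx w by rewrite /P !mulmxA.
    by rewrite C1 mul_mx_scalar -scalemxAl.
  have c1 : 1 + c != 0 by rewrite lt0r_neq0 // ltr_wpDl.
  set d := (1 + c)^-1.
  have hd : d * (1 + c) = 1 by rewrite mulVf.
  set M := 1%:M - d *: P.
  set G := M *m (Gamma0 + Om *m w *m ctmx v).
  have GB : G *m B = 1%:M.
    rewrite /G -mulmxA (mulmxDl Gamma0) hG0 -(mulmxA (Om *m w)) vB -/P /M mulmxBl mul1mx mulmxDr mulmx1.
    rewrite -scalemxAl PP scalerA -addrA -scalerDl -{1}[P]scale1r -scalerBl.
    have -> : 1 - (d + d * c) = 0 by rewrite -hd; ring.
    by rewrite scale0r addr0.
  have GR : qR Rm G = M *m Om *m ctmx M.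
    move: G'R; rewrite /qR /G; set G' := Gamma0 + _ => G'R.
    by rewrite ctmxM -G'R !mulmxA.
  set u := (1 + c) *: w.
  have cu : ctmx u = (1 + c) *: ctmx w.
    by rewrite /u ctmxZ rmorphD rmorph1; congr ((1 + _) *: _); exact: cc.
  have uM : ctmx u *m M = ctmx w.
    rewrite cu /M mulmxBr mulmx1 -scalemxAr /P !mulmxA -!scalemxAl C1 mul_scalar_mx.
    move: (ctmx w) => W; apply/matrixP => i j; rewrite !mxE mulrA hd mul1r; ring.

  have Mu : ctmx M *m u = w.
    by rewrite -[u]ctmxK -ctmxM uM ctmxK.
  have := hmin G GB u.
  rewrite /loewner_le /qf GR mulmxBr mulmxBl.
  rewrite !mulmxA uM -(mulmxA _ (ctmx M)) Mu cu /u -scalemxAl -scalemxAr -scalemxAl C1.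
  rewrite !mxE eqxx mulr1n.
  have -> : c - (1 + c) * ((1 + c) * c) = - (c * c * (2%:R + c)) by ring.
  rewrite oppr_ge0 => h.
  have : 0 < c * c * (2%:R + c) by rewrite !mulr_gt0 // addr_gt0 // ltr0n.
  by move=> hpos; move: (lt_le_trans hpos h); rewrite ltxx.
have stepB : forall v : 'cV_n, Rm *m v = 0 -> Rm *m (ctmx A *m v) = 0.
  move=> v hv; have hBv := stepA v hv.
  apply: psd_ker => //.
  rewrite /qf ctmxM ctmxK.
  have -> : ctmx v *m A *m Rm *m (ctmx A *m v) = ctmx v *m (A *m Rm *m ctmx A) *m v
    by rewrite !mulmxA.
  case: hstein => H hH.
  have -> : A *m Rm *m ctmx A = Rm - (B *m H + ctmx H *m ctmx B)
    by rewrite -hH opprB addrC subrK.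
  have vR' : forall p (Y : 'M_(n, p)), ctmx v *m Rm *m Y = 0.
    by move=> p Y; rewrite vR // mul0mx.
  have vB' : forall p (Y : 'M_(m, p)), ctmx v *m B *m Y = 0.
    by move=> p Y; rewrite -[B]ctmxK -ctmxM hBv ctmx0 mul0mx.
  have hBv' : forall p (X : 'M_(p, m)), X *m ctmx B *m v = 0.
    by move=> p X; rewrite -mulmxA hBv mulmx0.
  rewrite mulmxBr mulmxDr mulmxBl mulmxDl !mulmxA vR' vB' hBv' !mxE.
  rewrite big1 => [|j _]; first by rewrite addr0 subr0.
  by rewrite mxE mul0r.
move=> v hv0.
have hq := hRpsd v.
rewrite lt_def hq andbT; apply/negP => /eqP hq0.
have hv : Rm *m v = 0 by apply: psd_ker.
have iter : forall k, Rm *m ctmx (ctmx v *m A ^+ k) = 0.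
  elim=> [|k IH]; first by rewrite expr0 mulmx1 ctmxK.
  by rewrite exprSr -mulmxE mulmxA ctmxM stepB.
have hz : ctmx v *m reach_mx A B = 0 *m reach_mx A B.
  rewrite mul0mx /reach_mx mul_mxrow -(mxrow0 1).
  apply: eq_mxrow => k.
  rewrite mulmxA -[ctmx v *m A ^+ k]ctmxK -[B]ctmxK -ctmxM stepA ?ctmx0 //.
have rf : row_free (reach_mx A B) by rewrite /row_free hreach.
move: (row_free_inj rf hz) => /ctmx_eq0 hv'.
by move: hv0; rewrite hv' eqxx.
Qed.

End CT.

Local Open Scope complex_scope.

Theorem proposition2 (R : realType) (m n : nat) (hm : (0 < m)%N) (hn : (0 < n)%N)
  (A : 'M[R[i]]_n) (B : 'M[R[i]]_(n, m))
  (hrkB : \rank B = m)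
  (hreach : reachable A B)
  (hstab : forall lam : R[i], eigenvalue A lam -> `|lam| < 1)
  (Rm : 'M[R[i]]_n) (hRherm : herm_mx Rm) (hRpsd : psd Rm)
  (hstein : exists H : 'M[R[i]]_(m, n),
      Rm - A *m Rm *m ctmx A = B *m H + ctmx H *m ctmx B)
  (Gamma0 : 'M[R[i]]_(m, n)) (hG0 : Gamma0 *m B = 1%:M)
  (hmin : forall Gamma : 'M[R[i]]_(m, n), Gamma *m B = 1%:M ->
      loewner_le (qR Rm Gamma0) (qR Rm Gamma))
  (hOmega : pd (qR Rm Gamma0)) :
  pd Rm.
Proof. exact: (@main_gen _ m n A B hreach Rm hRherm hRpsd hstein Gamma0 hG0 hmin hOmega). Qed.
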